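(* Let $n\ge1$ and let $S\subseteq\mathbb{Z}_{2^n}$ with $|S|=2^{n-1}+1$. For every integer $a$ with $1\le a\le n$, $$|C(a,a,a+)|\ge\max\{|S_a|(|S_{a+}|-|L_a|+|S_a|),\;|S_{a+}|(2|S_a|-|L_a|),\;0\}.$$
   Context: Layers: for $1\le i\le n$, $L_i=\{x\in\mathbb{Z}_{2^n}: x\equiv 2^{i-1}\pmod{2^i}\}$, $L_{n+1}=\{0\}$. $S_i=S\cap L_i$ and $S_{i+}=S\cap(L_{i+1}\cup\dots\cup L_{n+1})$. $C(a,a,a+)$ is the set of ordered triples $(x,y,z)$ with $x+y=z$ in $\mathbb{Z}_{2^n}$, $x\in S_a$, $y\in S_a$, $z\in S_{a+}$. *)

(* Defs.v *)
(* Z_{2^n} is modelled as 'I_(2^n) with addition mod 2^n. *)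
From mathcomp Require Import all_boot all_order all_algebra.
Set Implicit Arguments. Unset Strict Implicit. Unset Printing Implicit Defensive.
Import Order.TTheory GRing.Theory Num.Theory.

Definition addmod (n : nat) (x y : 'I_(2 ^ n)) : nat := (x + y) %% 2 ^ n.

Definition layer (n i : nat) : {set 'I_(2 ^ n)} :=
  [set x : 'I_(2 ^ n) |
     if (1 <= i <= n) then (x %% 2 ^ i == 2 ^ i.-1)
     else (i == n.+1) && (nat_of_ord x == 0)].

Definition Slayer (n : nat) (S : {set 'I_(2 ^ n)}) (i : nat) : {set 'I_(2 ^ n)} :=
  S :&: layer n i.

Definition Splus (n : nat) (S : {set 'I_(2 ^ n)}) (i : nat) : {set 'I_(2 ^ n)} :=
  [set x in S | [exists j : 'I_(n.+2), (i < j) && (x \in layer n j)]].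

Definition Caaap (n : nat) (S : {set 'I_(2 ^ n)}) (a : nat)
  : {set 'I_(2 ^ n) * 'I_(2 ^ n) * 'I_(2 ^ n)} :=
  [set t | [&& t.1.1 \in Slayer S a, t.1.2 \in Slayer S a,
             t.2 \in Splus S a & nat_of_ord t.2 == addmod t.1.1 t.1.2]].

(* Main.v *)
Require Import Defs.
From mathcomp Require Import all_boot all_order all_algebra.
From mathcomp Require Import zify.
Import Order.TTheory GRing.Theory Num.Theory.
Set Implicit Arguments. Unset Strict Implicit. Unset Printing Implicit Defensive.

Lemma N_gt0 n : 0 < 2 ^ n. Proof. by rewrite expn_gt0. Qed.

Definition tr n (x y : 'I_(2^n)) : 'I_(2^n) := Ordinal (ltn_pmod (x + y) (N_gt0 n)).
Definition sb n (z x : 'I_(2^n)) : 'I_(2^n) := Ordinal (ltn_pmod (z + (2^n - x)) (N_gt0 n)).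

Lemma tr_inj n x : injective (@tr n x).
Proof.
move=> y y' /(congr1 val) /= /eqP; rewrite eqn_modDl !modn_small // => /eqP H.
by apply: val_inj.
Qed.

Lemma sb_add n (z x : 'I_(2^n)) : (x + sb z x) %% 2^n = z.
Proof.
rewrite /= modnDmr.
have -> : x + (z + (2 ^ n - x)) = z + 2^n by have := ltn_ord x; lia.
by rewrite modnDr modn_small.
Qed.

Lemma sb_inj n z : injective (@sb n z).
Proof.
move=> x x' E.
have := sb_add z x; have := sb_add z x'; rewrite -E => A B.
have : (x + sb z x) = (x' + sb z x) %[mod 2^n] by rewrite A B.
move/eqP; rewrite -!(addnC (nat_of_ord (sb z x))) eqn_modDl !modn_small // => /eqP H.
by apply: val_inj.
Qed.

Lemma half_lem h r : 0 < h -> r < h.*2 -> (h + r) %% h.*2 = 0 -> r = h.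
Proof.
rewrite -mul2n => h0 rh; case: (ltnP r h) => Hr.
  by rewrite modn_small; lia.
have -> : h + r = 2 * h + (r - h) by lia.
rewrite modnDl modn_small; lia.
Qed.

Lemma comp_lem a x y : 1 <= a -> x %% 2^a = 2^a.-1 -> (x + y) %% 2^a = 0 -> y %% 2^a = 2^a.-1.
Proof.
move=> a1 Hx Hxy.
have E : 2^a = (2^a.-1).*2 by rewrite -mul2n -expnS prednK.
apply: half_lem; first by rewrite expn_gt0.
  by rewrite -E ltn_pmod // expn_gt0.
by rewrite -E -Hx modnDm.
Qed.

Lemma splus_mod n (S : {set 'I_(2^n)}) a (z : 'I_(2^n)) : a <= n -> z \in Splus S a -> z %% 2^a = 0.
Proof.
move=> an; rewrite inE => /andP [_ /existsP [j /andP [aj]]].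
rewrite /layer inE.
case: ifP => [/andP [j1 jn] /eqP Hj | _ /andP [_ /eqP ->]]; last by rewrite mod0n.
have d : 2^a %| 2^j by rewrite dvdn_exp2l // ltnW.
rewrite -(modn_dvdm z d) Hj.
apply/eqP; rewrite -/(dvdn _ _) dvdn_exp2l //; lia.
Qed.
Lemma card_dep (T : finType) (A : {set T}) (F : T -> {set T}) :
  #|[set p : T * T | (p.1 \in A) && (p.2 \in F p.1)]| = \sum_(x in A) #|F x|.
Proof.
rewrite -sum1_card big_mkcond /=.
rewrite (eq_bigr (fun p : T * T => (fun i j => if (i, j) \in [set p : T * T | (p.1 \in A) && (p.2 \in F p.1)] then 1 else 0) p.1 p.2)); last by move=> [].
rewrite -(pair_bigA _ (fun i j => if (i, j) \in [set p : T * T | (p.1 \in A) && (p.2 \in F p.1)] then 1 else 0)) /=.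
rewrite [RHS]big_mkcond /=; apply: eq_bigr => x _.
case: (boolP (x \in A)) => xA.
  rewrite -sum1_card [RHS]big_mkcond /=; apply: eq_bigr => y _; by rewrite inE /= xA.
by apply: big1 => y _; rewrite inE /= (negbTE xA).
Qed.

Lemma incl_excl (T:finType) (A B L : {set T}) : A \subset L -> B \subset L -> #|A| + #|B| <= #|A :&: B| + #|L|.
Proof.
move=> AL BL; rewrite -cardsUI addnC leq_add2l subset_leq_card //.
by rewrite subUset AL.
Qed.

Lemma inL n a (x : 'I_(2^n)) : 1 <= a <= n -> (x \in layer n a) = (x %% 2^a == 2^a.-1).
Proof. by move=> H; rewrite /layer inE H. Qed.

Lemma dvd_an n a : a <= n -> 2^a %| 2^n.
Proof. by move=> H; rewrite dvdn_exp2l. Qed.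

Lemma bound1 n (S : {set 'I_(2^n)}) a : 1 <= a <= n ->
  #|Slayer S a| * (#|Slayer S a| + #|Splus S a|) <= #|Caaap S a| + #|Slayer S a| * #|layer n a|.
Proof.
move=> /andP [a1 an].
set Sa := Slayer S a; set Sp := Splus S a; set L := layer n a.
pose F1 x := Sa :&: (tr x @^-1: Sp).
pose P1 := [set p : 'I_(2^n) * 'I_(2^n) | (p.1 \in Sa) && (p.2 \in F1 p.1)].
have H1 : #|P1| <= #|Caaap S a|.
  rewrite -(card_imset _ (f := fun p => (p, tr p.1 p.2))); last first.
    by move=> p q [].
  apply: subset_leq_card; apply/subsetP => t /imsetP [p].
  rewrite inE => /andP [p1 p2] ->.
  move: p2; rewrite in_setI => /andP [p2]; rewrite inE => p3.
  by rewrite /Caaap inE /=; apply/and4P; split => //.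
have H2 : forall x, x \in Sa -> #|Sa| + #|Sp| <= #|F1 x| + #|L|.
  move=> x xS.
  rewrite -(card_preimset Sp (@tr_inj n x)).
  apply: incl_excl; first by apply: subsetIr.
  apply/subsetP => y; rewrite inE => /(splus_mod an) /= .
  rewrite (modn_dvdm (x + y) (dvd_an an)) => Hy.
  rewrite inL ?a1 ?an //; apply/eqP; apply: (comp_lem a1 _ Hy).
  by apply/eqP; rewrite -inL ?a1 ?an //; move: xS; rewrite inE => /andP [].
rewrite card_dep in H1.
have H3 : \sum_(x in Sa) (#|Sa| + #|Sp|) <= \sum_(x in Sa) (#|F1 x| + #|L|) by apply: leq_sum.
rewrite !big_split /= !sum_nat_const in H3.
by rewrite mulnDr; apply: (leq_trans H3); rewrite leq_add2r.
Qed.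

Lemma bound2 n (S : {set 'I_(2^n)}) a : 1 <= a <= n ->
  #|Splus S a| * (2 * #|Slayer S a|) <= #|Caaap S a| + #|Splus S a| * #|layer n a|.
Proof.
move=> /andP [a1 an].
set Sa := Slayer S a; set Sp := Splus S a; set L := layer n a.
pose F2 z := Sa :&: (sb z @^-1: Sa).
pose P2 := [set p : 'I_(2^n) * 'I_(2^n) | (p.1 \in Sp) && (p.2 \in F2 p.1)].
have H1 : #|P2| <= #|Caaap S a|.
  rewrite -(card_imset _ (f := fun p => ((p.2, sb p.1 p.2), p.1))); last first.
    by move=> [p1 p2] [q1 q2] [-> _ ->].
  apply: subset_leq_card; apply/subsetP => t /imsetP [p].
  rewrite inE => /andP [p1 p2] ->.
  move: p2; rewrite in_setI => /andP [p2]; rewrite inE => p3.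
  rewrite /Caaap inE /=; apply/and4P; split => //.
  by rewrite /addmod sb_add.
have H2 : forall z, z \in Sp -> #|Sa| + #|Sa| <= #|F2 z| + #|L|.
  move=> z zS.
  rewrite -{2}(card_preimset Sa (@sb_inj n z)).
  apply: incl_excl; first by apply: subsetIr.
  apply/subsetP => x; rewrite inE => xS.
  have Hz := splus_mod an zS.
  have Hy : (sb z x + x) %% 2^a = 0.
    by rewrite -(modn_dvdm (sb z x + x) (dvd_an an)) addnC sb_add.
  rewrite inL ?a1 ?an //; apply/eqP; apply: (comp_lem a1 _ Hy).
  by apply/eqP; rewrite -inL ?a1 ?an //; move: xS; rewrite inE => /andP [].
rewrite card_dep in H1.
have H3 : \sum_(x in Sp) (#|Sa| + #|Sa|) <= \sum_(x in Sp) (#|F2 x| + #|L|) by apply: leq_sum.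
rewrite !big_split /= !sum_nat_const in H3.
by rewrite mulnCA mul2n -addnn; apply: (leq_trans H3); rewrite leq_add2r.
Qed.

Local Open Scope ring_scope.

Theorem claim4p2 (n : nat) (S : {set 'I_(2 ^ n)}) (a : nat) :
  (1 <= n)%N -> #|S| = (2 ^ n.-1).+1 -> (1 <= a <= n)%N ->
  Num.max (#|Slayer S a|%:Z * (#|Splus S a|%:Z - #|layer n a|%:Z + #|Slayer S a|%:Z))
    (Num.max (#|Splus S a|%:Z * (2 * #|Slayer S a|%:Z - #|layer n a|%:Z)) 0)
  <= #|Caaap S a|%:Z.
Proof.
move=> _ _ Ha.
have B1 := bound1 S Ha; have B2 := bound2 S Ha.
move: B1 B2.
set sa := #|Slayer S a|; set sp := #|Splus S a|; set l := #|layer n a|; set c := #|Caaap S a|.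
move=> B1 B2.
rewrite !ge_max; apply/and3P; split => //.
  nia.
nia.
Qed.
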